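(* Let $N,L\ge1$. Then for any $k\in\mathbb{R}^2$ and any $A\ge|k|$, the set \[ \{k'\in\mathbb{R}^2:\ |k'|\le N,\ |k-k'|\le N,\ |k'|+|k-k'|\in[A,A+L]\} \] can be covered by at most $O(N^{\frac32}L^{\frac12})$ squares of unit side length, with the implied constant independent of $N,L,k,A$. *)

(* Defs.v *)
From Stdlib Require Import Reals List.
Open Scope R_scope.

Definition norm2 (p : R * R) : R := sqrt (fst p ^ 2 + snd p ^ 2).

Definition sub2 (p q : R * R) : R * R := (fst p - fst q, snd p - snd q).

Definition in_unit_square (c p : R * R) : Prop :=
  fst c <= fst p <= fst c + 1 /\ snd c <= snd p <= snd c + 1.

Definition shell_set (N L A : R) (k : R * R) (k' : R * R) : Prop :=
  norm2 k' <= N /\ norm2 (sub2 k k') <= N /\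
  A <= norm2 k' + norm2 (sub2 k k') <= A + L.

(* Main.v *)
Require Import Defs.
From Stdlib Require Import Reals List Lra Lia Psatz ZArith Classical.
Open Scope R_scope.

Lemma floor_nat (t : R) : 0 <= t -> exists j : nat, INR j <= t < INR j + 1.
Proof.
  intros Ht. destruct (base_Int_part t) as [H1 H2].
  assert (Hz : (-1 < Int_part t)%Z) by (apply lt_IZR; simpl; lra).
  exists (Z.to_nat (Int_part t)). rewrite INR_IZR_INZ, Z2Nat.id by lia. lra.
Qed.

Lemma up_nat (x : R) : 0 < x ->
  x < INR (Z.to_nat (up x)) <= x + 1.
Proof.
  intros Hx. destruct (archimed x) as [H1 H2].
  assert (Hz : (0 < up x)%Z) by (apply lt_IZR; simpl; lra).
  rewrite INR_IZR_INZ, Z2Nat.id by lia. lra.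
Qed.

Lemma cover1d (a b : R) : exists ys : list R,
  INR (length ys) <= Rmax 0 (b - a) + 2 /\
  forall y, a <= y <= b -> exists t, In t ys /\ t <= y <= t + 1.
Proof.
  destruct (Rlt_dec b a) as [Hba|Hab].
  - exists nil. simpl. split. { unfold Rmax; destruct Rle_dec; lra. }
    intros y Hy; lra.
  - set (n := Z.to_nat (up (b - a + 1))).
    exists (map (fun j => a + INR j) (seq 0 n)). split.
    + rewrite length_map, length_seq. destruct (up_nat (b - a + 1)) as [_ H]; [lra|].
      unfold n. unfold Rmax; destruct Rle_dec; lra.
    + intros y Hy. destruct (floor_nat (y - a)) as [j Hj]; [lra|].
      exists (a + INR j). split; [|lra].
      apply (in_map (fun j0 => a + INR j0)). apply in_seq. split; [lia|].
      destruct (up_nat (b - a + 1)) as [H _]; [lra|].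
      fold n in H. simpl. apply INR_lt. lra.
Qed.

Lemma sqrt_shift (a b y : R) : Rabs (a - b) <= 1 ->
  sqrt (a^2 + y^2) <= sqrt (b^2 + y^2) + 1.
Proof.
  intros H.
  assert (Hb : Rabs b <= sqrt (b^2 + y^2)).
  { rewrite <- sqrt_Rsqr_abs. apply sqrt_le_1_alt. unfold Rsqr; nra. }
  assert (Hs := sqrt_pos (b^2+y^2)).
  apply Rsqr_incr_0_var; [| lra].
  rewrite Rsqr_sqrt by nra.
  assert (Hsq := sqrt_sqrt (b^2+y^2) ltac:(nra)).
  assert (Ha : Rabs a <= Rabs b + 1).
  { assert (Rabs a = Rabs (b + (a - b))) by (f_equal; ring). rewrite H0.
    eapply Rle_trans; [apply Rabs_triang|lra]. }
  assert (Ea : a^2 = Rabs a * Rabs a) by (rewrite <- Rabs_mult, Rabs_right by nra; ring).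
  assert (0 <= Rabs a) by apply Rabs_pos.
  unfold Rsqr.
  assert (a^2 <= (Rabs b + 1)^2) by (rewrite Ea; nra).
  assert (Eb : b^2 = Rabs b * Rabs b) by (rewrite <- Rabs_mult, Rabs_right by nra; ring).
  assert (a^2 <= b^2 + 2 * sqrt (b^2+y^2) + 1) by nra.
  nra.
Qed.

Definition Bq s x k1 k2 := s^2 - (k1^2+k2^2) + 2*k1*x.
Definition Dq s x k1 k2 := (Bq s x k1 k2)^2 - 4*x^2*(s^2-k2^2).
Definition uq s x y k1 k2 := 2*(s^2-k2^2)*y - Bq s x k1 k2 * k2.
Definition gq x y k1 k2 := sqrt (x^2+y^2) + sqrt ((k1-x)^2+(k2-y)^2).

Lemma sq_lt a b : 0 <= a -> 0 <= b -> a*a < b*b -> a < b.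
Proof. intros Ha Hb H. apply Rnot_le_lt. intro C. assert (b*b <= a*a) by (apply Rmult_le_compat; lra). lra. Qed.
Lemma sq_le a b : 0 <= a -> 0 <= b -> a*a <= b*b -> a <= b.
Proof. intros Ha Hb H. apply Rnot_lt_le. intro C. assert (b*b < a*a) by (apply Rmult_le_0_lt_compat; lra). lra. Qed.

Lemma uq_ident s x y k1 k2 :
  (uq s x y k1 k2)^2 - s^2 * Dq s x k1 k2 =
  (s^2 - k2^2) * (4*s^2*(x^2+y^2) - (Bq s x k1 k2 + 2*k2*y)^2).
Proof. unfold uq, Dq, Bq. ring. Qed.

Lemma ell_out s x y k1 k2 : k1^2+k2^2 < s^2 -> 0 < s ->
  gq x y k1 k2 <= s -> (uq s x y k1 k2)^2 <= s^2 * Dq s x k1 k2.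
Proof.
  intros Hk Hs Hg. unfold gq in Hg.
  set (r1 := sqrt (x^2+y^2)) in *. set (r2 := sqrt ((k1-x)^2+(k2-y)^2)) in *.
  assert (H1 : r1*r1 = x^2+y^2) by (apply sqrt_sqrt; pose proof (pow2_ge_0 x); pose proof (pow2_ge_0 y); lra).
  assert (H2 : r2*r2 = (k1-x)^2+(k2-y)^2) by (apply sqrt_sqrt; pose proof (pow2_ge_0 (k1-x)); pose proof (pow2_ge_0 (k2-y)); lra).
  assert (P1 : 0 <= r1) by apply sqrt_pos. assert (P2 : 0 <= r2) by apply sqrt_pos.
  assert (Hr : r2*r2 <= (s-r1)*(s-r1)).
  { assert (0 <= s - r1 - r2) by lra. assert (0 <= s - r1 + r2) by lra.
    assert (0 <= (s-r1-r2)*(s-r1+r2)) by (apply Rmult_le_pos; lra). nra. }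
  assert (E1 : (s-r1)*(s-r1) = s^2 - 2*s*r1 + r1*r1) by ring.
  assert (E2 : (k1-x)^2+(k2-y)^2 = x^2+y^2 - 2*k1*x - 2*k2*y + (k1^2+k2^2)) by ring.
  assert (HB : 2*s*r1 <= Bq s x k1 k2 + 2*k2*y) by (unfold Bq; lra).
  assert (HF : 4*s^2*(x^2+y^2) <= (Bq s x k1 k2 + 2*k2*y)^2).
  { assert (0 <= 2*s*r1) by (apply Rmult_le_pos; lra).
    assert ((2*s*r1)*(2*s*r1) <= (Bq s x k1 k2 + 2*k2*y)*(Bq s x k1 k2 + 2*k2*y))
      by (apply Rmult_le_compat; lra).
    assert ((2*s*r1)*(2*s*r1) = 4*s^2*(r1*r1)) by ring. rewrite H1 in H3. nra. }
  assert (Hk2 : 0 < s^2 - k2^2) by nra.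
  pose proof (uq_ident s x y k1 k2). nra.
Qed.

Lemma ell_in s x y k1 k2 : k1^2+k2^2 < s^2 -> 0 < s ->
  (uq s x y k1 k2)^2 < s^2 * Dq s x k1 k2 -> gq x y k1 k2 < s.
Proof.
  intros Hk Hs Hu. unfold gq.
  set (r1 := sqrt (x^2+y^2)). set (r2 := sqrt ((k1-x)^2+(k2-y)^2)).
  assert (H1 : r1*r1 = x^2+y^2) by (apply sqrt_sqrt; pose proof (pow2_ge_0 x); pose proof (pow2_ge_0 y); lra).
  assert (H2 : r2*r2 = (k1-x)^2+(k2-y)^2) by (apply sqrt_sqrt; pose proof (pow2_ge_0 (k1-x)); pose proof (pow2_ge_0 (k2-y)); lra).
  assert (P1 : 0 <= r1) by apply sqrt_pos. assert (P2 : 0 <= r2) by apply sqrt_pos.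
  assert (Hk2 : 0 < s^2 - k2^2) by nra.
  pose proof (uq_ident s x y k1 k2) as HI.
  assert (HF : 4*s^2*(x^2+y^2) < (Bq s x k1 k2 + 2*k2*y)^2).
  { apply Rnot_le_lt. intro HC. nra. }
  set (K := sqrt (k1^2+k2^2)).
  assert (HK : K*K = k1^2+k2^2) by (apply sqrt_sqrt; pose proof (pow2_ge_0 k1); pose proof (pow2_ge_0 k2); lra).
  assert (PK : 0 <= K) by apply sqrt_pos.
  assert (HKs : K < s) by (apply sq_lt; [lra|lra|]; replace (s*s) with (s^2) by ring; lra).
  assert (CS : (k1*x+k2*y)^2 <= (K*r1)^2).
  { replace ((K*r1)^2) with ((K*K)*(r1*r1)) by ring. rewrite HK, H1.
    assert ((k1^2+k2^2)*(x^2+y^2) - (k1*x+k2*y)^2 = (k1*y-k2*x)^2) by ring.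
    pose proof (pow2_ge_0 (k1*y-k2*x)). lra. }
  assert (CS2 : Rabs (k1*x+k2*y) <= K*r1).
  { apply sq_le; [apply Rabs_pos| apply Rmult_le_pos; lra |].
    rewrite <- Rabs_mult, Rabs_right by (apply Rle_ge; apply Rle_0_sqr).
    replace ((K*r1)*(K*r1)) with ((K*r1)^2) by ring. 
    replace ((k1 * x + k2 * y) * (k1 * x + k2 * y)) with ((k1*x+k2*y)^2) by ring. lra. }
  assert (CS3 : k1*x+k2*y <= K*r1 /\ -(K*r1) <= k1*x+k2*y).
  { split; [apply Rle_trans with (Rabs (k1*x+k2*y)); [apply Rle_abs|lra]|].
    apply Rle_trans with (- Rabs (k1*x+k2*y)); [lra|].
    rewrite <- Rabs_Ropp. pose proof (Rle_abs (-(k1*x+k2*y))). lra. }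
  unfold Bq in HF. rewrite <- HK in HF.
  destruct (Rle_lt_dec 0 (s^2 - K*K + 2*k1*x + 2*k2*y)) as [HB|HB].
  - assert (Hr : 2*s*r1 < s^2 - K*K + 2*k1*x + 2*k2*y) by nra.
    assert (Hr1 : 2*r1 < s + K) by nra.
    assert (r2*r2 < (s-r1)*(s-r1)) by nra.
    nra.
  - assert (Hr : 2*s*r1 < -(s^2 - K*K + 2*k1*x + 2*k2*y)) by nra.
    nra.
Qed.

Definition Pq s x k1 k2 := Bq s x k1 k2 * k2 / (2*(s^2-k2^2)).
Definition Qq s x k1 k2 := s * sqrt (Dq s x k1 k2) / (2*(s^2-k2^2)).

Lemma Dq_ident s x k1 k2 :
  Dq s x k1 k2 = (s^2 - (k1^2+k2^2)) * (s^2 - k2^2 - (2*x-k1)^2).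
Proof. unfold Dq, Bq. ring. Qed.

Lemma abs_sq_le a b : 0 <= b -> a*a <= b*b -> -b <= a <= b.
Proof.
  intros Hb H. assert (Rabs a <= b).
  { apply sq_le; [apply Rabs_pos|lra|]. rewrite <- Rabs_mult, Rabs_right by (apply Rle_ge, Rle_0_sqr). lra. }
  split; [|apply Rle_trans with (Rabs a); [apply Rle_abs|lra]].
  pose proof (Rle_abs (-a)). rewrite Rabs_Ropp in H1. lra.
Qed.

Lemma y_minus_P s x y k1 k2 : 0 < s^2 - k2^2 ->
  y - Pq s x k1 k2 = uq s x y k1 k2 / (2*(s^2-k2^2)).
Proof. intros H. unfold Pq, uq. field. lra. Qed.

Lemma interval_of s x y k1 k2 : k1^2+k2^2 < s^2 -> 0 < s ->
  gq x y k1 k2 <= s ->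
  0 <= Dq s x k1 k2 /\
  Pq s x k1 k2 - Qq s x k1 k2 <= y <= Pq s x k1 k2 + Qq s x k1 k2.
Proof.
  intros Hk Hs Hg. pose proof (ell_out s x y k1 k2 Hk Hs Hg) as Hu.
  assert (Hk2 : 0 < s^2 - k2^2) by (pose proof (pow2_ge_0 k1); lra).
  assert (Hs2 : 0 < s^2) by nra.
  pose proof (pow2_ge_0 (uq s x y k1 k2)).
  assert (HD : 0 <= Dq s x k1 k2).
  { apply Rnot_lt_le; intro C. nra. }
  split; [exact HD|].
  pose proof (sqrt_sqrt _ HD) as HS. pose proof (sqrt_pos (Dq s x k1 k2)).
  assert (Hab : - (s * sqrt (Dq s x k1 k2)) <= uq s x y k1 k2 <= s * sqrt (Dq s x k1 k2)).
  { apply abs_sq_le. { apply Rmult_le_pos; lra. }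
    replace (s * sqrt (Dq s x k1 k2) * (s * sqrt (Dq s x k1 k2))) with (s^2 * (sqrt (Dq s x k1 k2) * sqrt (Dq s x k1 k2))) by ring.
    rewrite HS. lra. }
  pose proof (y_minus_P s x y k1 k2 Hk2) as E.
  assert (Hi : 0 < / (2*(s^2-k2^2))) by (apply Rinv_0_lt_compat; lra).
  unfold Qq. unfold Rdiv in *.
  assert (uq s x y k1 k2 * / (2 * (s ^ 2 - k2 ^ 2)) <= s * sqrt (Dq s x k1 k2) * / (2 * (s ^ 2 - k2 ^ 2))) by (apply Rmult_le_compat_r; lra).
  assert (-(s * sqrt (Dq s x k1 k2)) * / (2 * (s ^ 2 - k2 ^ 2)) <= uq s x y k1 k2 * / (2 * (s ^ 2 - k2 ^ 2))) by (apply Rmult_le_compat_r; lra).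
  lra.
Qed.

Lemma not_inside s x y k1 k2 : k1^2+k2^2 < s^2 -> 0 < s -> 0 <= Dq s x k1 k2 ->
  Pq s x k1 k2 - Qq s x k1 k2 < y < Pq s x k1 k2 + Qq s x k1 k2 ->
  gq x y k1 k2 < s.
Proof.
  intros Hk Hs HD Hy. apply ell_in; auto.
  assert (Hk2 : 0 < s^2 - k2^2) by (pose proof (pow2_ge_0 k1); lra).
  pose proof (y_minus_P s x y k1 k2 Hk2) as E.
  unfold Qq in Hy. 
  set (d := 2*(s^2-k2^2)) in *.
  assert (Hd : 0 < d) by (unfold d; lra).
  assert (Eu : uq s x y k1 k2 = (y - Pq s x k1 k2) * d) by (rewrite E; field; lra).
  assert (Hq : s * sqrt (Dq s x k1 k2) / d * d = s * sqrt (Dq s x k1 k2)) by (field; lra).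
  assert (H1 : - (s * sqrt (Dq s x k1 k2)) < uq s x y k1 k2 < s * sqrt (Dq s x k1 k2)).
  { rewrite Eu. split.
    - rewrite <- Hq. assert (- (s * sqrt (Dq s x k1 k2) / d) < y - Pq s x k1 k2) by lra. nra.
    - rewrite <- Hq. assert (y - Pq s x k1 k2 < s * sqrt (Dq s x k1 k2) / d) by lra. nra. }
  pose proof (sqrt_sqrt _ HD) as HS.
  replace (s^2 * Dq s x k1 k2) with ((s * sqrt (Dq s x k1 k2))*(s * sqrt (Dq s x k1 k2))) by (rewrite <- HS at 3; ring).
  replace (uq s x y k1 k2 ^2) with (uq s x y k1 k2 * uq s x y k1 k2) by ring.
  nra.
Qed.

Lemma dP_bound s1 Lp x k1 k2 : 0 < s1 -> 0 < Lp -> k2^2 <= k1^2 ->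
  k1^2 + k2^2 < s1^2 -> 0 <= Dq s1 x k1 k2 ->
  Rabs (Pq (s1+Lp) x k1 k2 - Pq s1 x k1 k2) <= 4 * Lp.
Proof.
  intros H1 HL Hkk Hk HD. set (s2 := s1 + Lp).
  assert (d1 : s1^2/2 <= s1^2 - k2^2) by lra.
  assert (d2 : s2^2/2 <= s2^2 - k2^2).
  { assert (s1^2 <= s2^2) by (unfold s2; nra). lra. }
  assert (Hc : (2*x-k1)^2 <= s1^2 - k2^2).
  { rewrite Dq_ident in HD. apply Rnot_lt_le; intro C. 
    assert (0 < (s1^2-(k1^2+k2^2)) * ((2*x-k1)^2 - (s1^2 - k2^2))) by (apply Rmult_lt_0_compat; lra). lra. }
  assert (Q1 : 0 < s1^2) by nra. assert (Q2 : 0 < s2^2) by (unfold s2; nra).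
  assert (E : Pq s2 x k1 k2 - Pq s1 x k1 k2 =
     (k2*k1*(2*x-k1)) * (s1^2 - s2^2) / (2*(s1^2-k2^2)*(s2^2-k2^2))).
  { unfold Pq, Bq. field. split; apply Rgt_not_eq; lra. }
  rewrite E. set (n := k2*k1*(2*x-k1)).
  assert (Hn : n*n <= (s1^3)*(s1^3)).
  { unfold n. 
    assert (k2^2 <= s1^2) by (pose proof (pow2_ge_0 k1); lra).
    assert (k1^2 <= s1^2) by (pose proof (pow2_ge_0 k2); lra).
    assert ((2*x-k1)^2 <= s1^2) by (pose proof (pow2_ge_0 k2); lra).
    replace (k2 * k1 * (2 * x - k1) * (k2 * k1 * (2 * x - k1))) with (k2^2 * (k1^2 * (2*x-k1)^2)) by ring.
    replace (s1^3 * s1^3) with (s1^2 * (s1^2 * s1^2)) by ring.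
    pose proof (pow2_ge_0 k2). pose proof (pow2_ge_0 k1). pose proof (pow2_ge_0 (2*x-k1)).
    apply Rmult_le_compat; try nra. }
  assert (Hna : Rabs n <= s1^3).
  { apply sq_le; [apply Rabs_pos| nra|]. rewrite <- Rabs_mult, Rabs_right by (apply Rle_ge, Rle_0_sqr). lra. }
  assert (Hden : 0 < 2*(s1^2-k2^2)*(s2^2-k2^2)).
  { apply Rmult_lt_0_compat; lra. }
  assert (Hm : Rabs (s1^2 - s2^2) = s2^2 - s1^2).
  { rewrite Rabs_left1. ring. unfold s2; nra. }
  unfold Rdiv. rewrite Rabs_mult, Rabs_mult, Hm, Rabs_inv by lra.
  rewrite (Rabs_right (2 * (s1 ^ 2 - k2 ^ 2) * (s2 ^ 2 - k2 ^ 2))) by lra.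
  apply Rmult_le_reg_r with (2 * (s1 ^ 2 - k2 ^ 2) * (s2 ^ 2 - k2 ^ 2)); [lra|].
  rewrite Rmult_assoc, Rinv_l by lra. rewrite Rmult_1_r.
  assert (Hd : s1^2*s2^2/2 <= 2 * (s1 ^ 2 - k2 ^ 2) * (s2 ^ 2 - k2 ^ 2)).
  { assert (0 <= s1^2) by nra. assert (0 <= s2^2) by nra.
    assert (s1^2/2 * (s2^2/2) <= (s1 ^ 2 - k2 ^ 2) * (s2 ^ 2 - k2 ^ 2)) by (apply Rmult_le_compat; lra).
    lra. }
  assert (Hsd : 0 <= s2^2 - s1^2) by (unfold s2; nra).
  apply Rle_trans with (s1^3 * (s2^2 - s1^2)).
  { apply Rmult_le_compat_r; lra. }
  apply Rle_trans with (4 * Lp * (s1^2*s2^2/2)); [|apply Rmult_le_compat_l; lra].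
  replace (s2^2 - s1^2) with (Lp * (s2 + s1)) by (unfold s2; ring).
  assert (s1 * (s2 + s1) <= 2 * s2^2) by (unfold s2; nra).
  replace (4 * Lp * (s1 ^ 2 * s2 ^ 2 / 2)) with (Lp * s1^2 * (2*s2^2)) by field.
  replace (s1 ^ 3 * (Lp * (s2 + s1))) with (Lp * s1^2 * (s1 * (s2+s1))) by ring.
  apply Rmult_le_compat_l; [|lra]. nra.
Qed.

Lemma dQ_bound s1 Lp x k1 k2 : 0 < s1 -> 0 < Lp -> k2^2 <= k1^2 ->
  k1^2 + k2^2 < s1^2 -> 0 <= Dq s1 x k1 k2 ->
  Qq (s1+Lp) x k1 k2 - Qq s1 x k1 k2 <= 2 * sqrt ((s1+Lp) * Lp).
Proof.
  intros H1 HL Hkk Hk HD. set (s2 := s1 + Lp).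
  assert (d1 : s1^2/2 <= s1^2 - k2^2) by lra.
  assert (Hs12 : s1^2 <= s2^2) by (unfold s2; nra).
  assert (d2 : s2^2/2 <= s2^2 - k2^2) by lra.
  assert (Q1 : 0 < s1^2) by nra. assert (Q2 : 0 < s2^2) by (unfold s2; nra).
  assert (P1 : 0 < s1^2 - k2^2) by lra. assert (P2 : 0 < s2^2 - k2^2) by lra.
  assert (Hc : (2*x-k1)^2 <= s1^2 - k2^2).
  { rewrite Dq_ident in HD. apply Rnot_lt_le; intro C. 
    assert (0 < (s1^2-(k1^2+k2^2)) * ((2*x-k1)^2 - (s1^2 - k2^2))) by (apply Rmult_lt_0_compat; lra). lra. }
  set (w1 := s1 / (2*(s1^2-k2^2))). set (w2 := s2 / (2*(s2^2-k2^2))).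
  assert (EQ1 : Qq s1 x k1 k2 = w1 * sqrt (Dq s1 x k1 k2)) by (unfold Qq, w1, Rdiv; ring).
  assert (EQ2 : Qq s2 x k1 k2 = w2 * sqrt (Dq s2 x k1 k2)) by (unfold Qq, w2, Rdiv; ring).
  assert (Hw : w2 <= w1).
  { assert (E : w1 - w2 = (s2 - s1) * (s1*s2 + k2^2) / (2*(s1^2-k2^2)*(s2^2-k2^2))).
    { unfold w1, w2. field. split; apply Rgt_not_eq; lra. }
    assert (0 <= (s2 - s1) * (s1*s2 + k2^2) / (2*(s1^2-k2^2)*(s2^2-k2^2))).
    { apply Rmult_le_pos. apply Rmult_le_pos. unfold s2; lra.
      assert (0 <= s1*s2) by (unfold s2; nra). pose proof (pow2_ge_0 k2); lra.
      apply Rlt_le, Rinv_0_lt_compat. apply Rmult_lt_0_compat; lra. }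
    lra. }
  assert (Hw2 : 0 <= w2) by (unfold w2; apply Rmult_le_pos; [unfold s2; lra| apply Rlt_le, Rinv_0_lt_compat; lra]).
  assert (Hws : w2 * s2 <= 1).
  { unfold w2. replace (s2 / (2 * (s2 ^ 2 - k2 ^ 2)) * s2) with (s2^2 / (2 * (s2 ^ 2 - k2 ^ 2))) by (field; lra).
    apply Rmult_le_reg_r with (2 * (s2 ^ 2 - k2 ^ 2)); [lra|]. unfold Rdiv.
    rewrite Rmult_assoc, Rinv_l by lra. lra. }
  set (T := s2 * (2 * sqrt (s2 * Lp))).
  assert (HsL : 0 <= s2 * Lp) by (unfold s2; nra).
  assert (HT2 : T * T = 4 * s2^3 * Lp).
  { unfold T. replace (s2 * (2 * sqrt (s2 * Lp)) * (s2 * (2 * sqrt (s2 * Lp)))) with (4 * s2^2 * (sqrt (s2*Lp) * sqrt (s2*Lp))) by ring.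
    rewrite sqrt_sqrt by lra. ring. }
  assert (HT : 0 <= T) by (unfold T; pose proof (sqrt_pos (s2*Lp)); unfold s2 in *; nra).
  assert (HDD : Dq s2 x k1 k2 - Dq s1 x k1 k2 <= 4 * s2^3 * Lp).
  { rewrite !Dq_ident.
    replace ((s2 ^ 2 - (k1 ^ 2 + k2 ^ 2)) * (s2 ^ 2 - k2 ^ 2 - (2 * x - k1) ^ 2) -
             (s1 ^ 2 - (k1 ^ 2 + k2 ^ 2)) * (s1 ^ 2 - k2 ^ 2 - (2 * x - k1) ^ 2))
      with ((s2^2 - s1^2) * ((s2 ^ 2 - (k1 ^ 2 + k2 ^ 2)) + (s1 ^ 2 - k2 ^ 2 - (2 * x - k1) ^ 2))) by ring.
    assert (A1 : 0 <= s2^2 - s1^2 <= 2 * s2 * Lp) by (unfold s2; split; nra).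
    assert (A2 : 0 <= (s2 ^ 2 - (k1 ^ 2 + k2 ^ 2)) + (s1 ^ 2 - k2 ^ 2 - (2 * x - k1) ^ 2) <= 2 * s2^2).
    { pose proof (pow2_ge_0 k1). pose proof (pow2_ge_0 k2). pose proof (pow2_ge_0 (2*x-k1)). split; lra. }
    replace (4 * s2^3 * Lp) with ((2 * s2 * Lp) * (2 * s2^2)) by ring.
    apply Rmult_le_compat; lra. }
  pose proof (sqrt_pos (Dq s1 x k1 k2)) as S1.
  assert (HD2 : 0 <= Dq s2 x k1 k2).
  { rewrite !Dq_ident in *. pose proof (pow2_ge_0 k1).
    apply Rmult_le_pos; lra. }
  assert (Hsq : sqrt (Dq s2 x k1 k2) <= sqrt (Dq s1 x k1 k2) + T).
  { apply sq_le; [apply sqrt_pos| lra|]. rewrite sqrt_sqrt by lra.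
    replace ((sqrt (Dq s1 x k1 k2) + T) * (sqrt (Dq s1 x k1 k2) + T)) with
      (sqrt (Dq s1 x k1 k2) * sqrt (Dq s1 x k1 k2) + 2 * sqrt (Dq s1 x k1 k2) * T + T*T) by ring.
    rewrite sqrt_sqrt by lra. rewrite HT2.
    assert (0 <= 2 * sqrt (Dq s1 x k1 k2) * T) by (apply Rmult_le_pos; lra). lra. }
  rewrite EQ1, EQ2.
  assert (w2 * sqrt (Dq s2 x k1 k2) <= w2 * (sqrt (Dq s1 x k1 k2) + T)) by (apply Rmult_le_compat_l; lra).
  assert (w2 * sqrt (Dq s1 x k1 k2) <= w1 * sqrt (Dq s1 x k1 k2)) by (apply Rmult_le_compat_r; lra).
  assert (w2 * T <= 2 * sqrt (s2 * Lp)).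
  { unfold T. replace (w2 * (s2 * (2 * sqrt (s2 * Lp)))) with ((w2 * s2) * (2 * sqrt (s2 * Lp))) by ring.
    pose proof (sqrt_pos (s2*Lp)). 
    apply Rle_trans with (1 * (2 * sqrt (s2 * Lp))); [apply Rmult_le_compat_r; lra| lra]. }
  lra.
Qed.

Lemma D2_bound s1 Lp x k1 k2 : 0 < Lp -> 0 < s1 + Lp -> k1^2 + k2^2 < (s1+Lp)^2 ->
  ~ (0 < s1 /\ k1^2 + k2^2 < s1^2 /\ 0 <= Dq s1 x k1 k2) ->
  Dq (s1+Lp) x k1 k2 <= 2 * (s1+Lp)^3 * Lp.
Proof.
  intros HL Hs2 Hk Hn. set (s2 := s1 + Lp) in *.
  assert (HR : 0 <= 2 * s2^3 * Lp) by (apply Rmult_le_pos; [|lra]; assert (0 < s2^3) by (apply pow_lt; lra); lra).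
  assert (Dn := Dq_ident s1 x k1 k2).
  rewrite Dq_ident. set (E2 := s2 ^ 2 - (k1 ^ 2 + k2 ^ 2)). set (F2 := s2 ^ 2 - k2 ^ 2 - (2 * x - k1) ^ 2).
  assert (HE : 0 < E2) by (unfold E2; lra).
  assert (HF : F2 <= s2^2) by (unfold F2; pose proof (pow2_ge_0 k2); pose proof (pow2_ge_0 (2*x-k1)); lra).
  destruct (Rle_lt_dec F2 0) as [HF0|HF0].
  { assert (0 <= E2 * (-F2)) by (apply Rmult_le_pos; lra). lra. }
  assert (Hs22 : 0 < s2^2) by nra.
  replace (2 * s2^3 * Lp) with ((2 * s2 * Lp) * s2^2) by ring.
  destruct (Rle_lt_dec s1 0) as [Hs1|Hs1].
  { assert (E2 <= 2 * s2 * Lp).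
    { assert (E2 <= s2^2) by (unfold E2; pose proof (pow2_ge_0 k1); pose proof (pow2_ge_0 k2); lra).
      assert (s2^2 <= s2 * Lp) by (unfold s2 in *; nra). lra. }
    apply Rmult_le_compat; lra. }
  destruct (Rle_lt_dec (s1^2) (k1^2+k2^2)) as [HK|HK].
  { assert (E2 <= 2 * s2 * Lp).
    { assert (s2^2 - s1^2 <= 2 * s2 * Lp) by (unfold s2 in *; nra). unfold E2; lra. }
    apply Rmult_le_compat; lra. }
  assert (HD1 : Dq s1 x k1 k2 < 0) by (apply Rnot_le_lt; intro C; apply Hn; auto).
  set (F1 := s1 ^ 2 - k2 ^ 2 - (2 * x - k1) ^ 2) in *.
  assert (HF1 : F1 < 0).
  { apply Rnot_le_lt; intro C. assert (0 <= (s1 ^ 2 - (k1 ^ 2 + k2 ^ 2)) * F1) by (apply Rmult_le_pos; lra). lra. }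
  assert (F2 <= 2 * s2 * Lp).
  { assert (F2 = F1 + (s2^2 - s1^2)) by (unfold F1, F2; ring).
    assert (s2^2 - s1^2 <= 2 * s2 * Lp) by (unfold s2 in *; nra). lra. }
  assert (E2 <= s2^2) by (unfold E2; pose proof (pow2_ge_0 k1); pose proof (pow2_ge_0 k2); lra).
  rewrite (Rmult_comm E2). apply Rmult_le_compat; lra.
Qed.

Lemma single_bound s2 Lp x k1 k2 : 0 < s2 -> 0 <= Lp -> k2^2 <= k1^2 -> k1^2 + k2^2 < s2^2 ->
  Dq s2 x k1 k2 <= 2 * s2^3 * Lp ->
  2 * Qq s2 x k1 k2 <= 3 * sqrt (s2 * Lp).
Proof.
  intros Hs HL Hkk Hk HD.
  assert (d2 : s2^2/2 <= s2^2 - k2^2) by lra.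
  assert (Q2 : 0 < s2^2) by nra.
  set (w2 := s2 / (2*(s2^2-k2^2))).
  assert (EQ2 : Qq s2 x k1 k2 = w2 * sqrt (Dq s2 x k1 k2)) by (unfold Qq, w2, Rdiv; ring).
  assert (Hw2 : 0 <= w2) by (unfold w2; apply Rmult_le_pos; [lra| apply Rlt_le, Rinv_0_lt_compat; lra]).
  assert (Hws : w2 * s2 <= 1).
  { unfold w2. replace (s2 / (2 * (s2 ^ 2 - k2 ^ 2)) * s2) with (s2^2 / (2 * (s2 ^ 2 - k2 ^ 2))) by (field; lra).
    apply Rmult_le_reg_r with (2 * (s2 ^ 2 - k2 ^ 2)); [lra|]. unfold Rdiv.
    rewrite Rmult_assoc, Rinv_l by lra. lra. }
  set (T := s2 * (3/2 * sqrt (s2 * Lp))).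
  assert (HsL : 0 <= s2 * Lp) by nra.
  pose proof (sqrt_pos (s2*Lp)).
  assert (HT2 : T * T = 9/4 * s2^3 * Lp).
  { unfold T. replace (s2 * (3/2 * sqrt (s2 * Lp)) * (s2 * (3/2 * sqrt (s2 * Lp)))) with (9/4 * s2^2 * (sqrt (s2*Lp) * sqrt (s2*Lp))) by field.
    rewrite sqrt_sqrt by lra. field. }
  assert (HT : 0 <= T) by (unfold T; nra).
  assert (Hsq : sqrt (Dq s2 x k1 k2) <= T).
  { destruct (Rle_lt_dec (Dq s2 x k1 k2) 0) as [H0|H0].
    - rewrite sqrt_neg_0 by lra. lra.
    - apply sq_le; [apply sqrt_pos| lra|]. rewrite sqrt_sqrt by lra. rewrite HT2.
      assert (0 <= s2^3 * Lp) by (apply Rmult_le_pos; [apply pow_le|]; lra). lra. }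
  rewrite EQ2.
  assert (w2 * sqrt (Dq s2 x k1 k2) <= w2 * T) by (apply Rmult_le_compat_l; lra).
  assert (w2 * T <= 3/2 * sqrt (s2 * Lp)).
  { unfold T. replace (w2 * (s2 * (3/2 * sqrt (s2 * Lp)))) with ((w2 * s2) * (3/2 * sqrt (s2 * Lp))) by ring.
    apply Rle_trans with (1 * (3/2 * sqrt (s2 * Lp))); [apply Rmult_le_compat_r; lra| lra]. }
  lra.
Qed.

Lemma column k1 k2 A L x0 : 0 <= L -> k2^2 <= k1^2 -> sqrt (k1^2+k2^2) <= A ->
  exists ys : list R, INR (length ys) <= 8*(L+4) + 6*sqrt((A+L+2)*(L+4)) + 4 /\
  forall y, A - 2 <= gq x0 y k1 k2 <= A+L+2 -> exists t, In t ys /\ t <= y <= t+1.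
Proof.
  intros HL Hkk HA.
  set (s1 := A - 2). set (Lp := L + 4).
  replace (A+L+2) with (s1 + Lp) by (unfold s1, Lp; ring).
  assert (HLp : 0 < Lp) by (unfold Lp; lra).
  set (K := sqrt (k1^2+k2^2)) in *.
  assert (HK : K*K = k1^2+k2^2) by (apply sqrt_sqrt; pose proof (pow2_ge_0 k1); pose proof (pow2_ge_0 k2); lra).
  assert (PK : 0 <= K) by apply sqrt_pos.
  assert (Hs2 : 0 < s1 + Lp) by (unfold s1, Lp; lra).
  assert (Hk2 : k1^2 + k2^2 < (s1+Lp)^2).
  { rewrite <- HK. assert (K < s1 + Lp) by (unfold s1, Lp; lra). nra. }
  pose proof (sqrt_pos ((s1+Lp)*Lp)) as Hsq.
  destruct (classic (0 < s1 /\ k1^2 + k2^2 < s1^2 /\ 0 <= Dq s1 x0 k1 k2)) as [Hc|Hc].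
  - destruct Hc as [Hs1 [Hks1 HD1]].
    pose proof (dP_bound s1 Lp x0 k1 k2 Hs1 HLp Hkk Hks1 HD1) as HP.
    pose proof (dQ_bound s1 Lp x0 k1 k2 Hs1 HLp Hkk Hks1 HD1) as HQ.
    set (P1 := Pq s1 x0 k1 k2) in *. set (P2 := Pq (s1+Lp) x0 k1 k2) in *.
    set (Q1 := Qq s1 x0 k1 k2) in *. set (Q2 := Qq (s1+Lp) x0 k1 k2) in *.
    destruct (cover1d (P2 - Q2) (P1 - Q1)) as [ys1 [Hl1 Hc1]].
    destruct (cover1d (P1 + Q1) (P2 + Q2)) as [ys2 [Hl2 Hc2]].
    exists (ys1 ++ ys2). split.
    + rewrite length_app, plus_INR.
      pose proof (Rle_abs (P2 - P1)). pose proof (Rle_abs (-(P2 - P1))). rewrite Rabs_Ropp in H0.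
      assert (Rmax 0 (P1 - Q1 - (P2 - Q2)) <= 4*Lp + 2 * sqrt ((s1+Lp)*Lp)) by (apply Rmax_lub; lra).
      assert (Rmax 0 (P2 + Q2 - (P1 + Q1)) <= 4*Lp + 2 * sqrt ((s1+Lp)*Lp)) by (apply Rmax_lub; lra).
      unfold Lp in *. lra.
    + intros y [Hy1 Hy2].
      destruct (interval_of (s1+Lp) x0 y k1 k2 Hk2 Hs2 Hy2) as [_ [Hlo Hhi]].
      fold P2 Q2 in Hlo, Hhi.
      destruct (Rle_lt_dec y (P1 - Q1)) as [Ha|Ha].
      { destruct (Hc1 y) as [t [Ht1 Ht2]]; [lra|]. exists t; split; [apply in_or_app; left|]; auto. }
      destruct (Rle_lt_dec (P1 + Q1) y) as [Hb|Hb].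
      { destruct (Hc2 y) as [t [Ht1 Ht2]]; [lra|]. exists t; split; [apply in_or_app; right|]; auto. }
      exfalso. pose proof (not_inside s1 x0 y k1 k2 Hks1 Hs1 HD1 (conj Ha Hb)). unfold s1 in *; lra.
  - pose proof (D2_bound s1 Lp x0 k1 k2 HLp Hs2 Hk2 Hc) as HD2.
    pose proof (single_bound (s1+Lp) Lp x0 k1 k2 Hs2 (Rlt_le _ _ HLp) Hkk Hk2 HD2) as HS.
    destruct (cover1d (Pq (s1+Lp) x0 k1 k2 - Qq (s1+Lp) x0 k1 k2) (Pq (s1+Lp) x0 k1 k2 + Qq (s1+Lp) x0 k1 k2)) as [ys [Hl Hcv]].
    exists ys. split.
    + assert (Rmax 0 (Pq (s1+Lp) x0 k1 k2 + Qq (s1+Lp) x0 k1 k2 - (Pq (s1+Lp) x0 k1 k2 - Qq (s1+Lp) x0 k1 k2)) <= 3 * sqrt ((s1+Lp)*Lp)) by (apply Rmax_lub; lra).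
      unfold Lp in *. lra.
    + intros y [Hy1 Hy2].
      destruct (interval_of (s1+Lp) x0 y k1 k2 Hk2 Hs2 Hy2) as [_ Hi].
      apply Hcv; exact Hi.
Qed.

Lemma build (P : nat -> R*R -> Prop) (B : R) (M : nat) : 0 <= B ->
  (forall m, (m < M)%nat -> exists l : list (R*R), INR (length l) <= B /\
     forall p, P m p -> exists c, In c l /\ in_unit_square c p) ->
  exists l : list (R*R), INR (length l) <= INR M * B /\
     forall m p, (m < M)%nat -> P m p -> exists c, In c l /\ in_unit_square c p.
Proof.
  intros HB. induction M as [|M IH]; intros H.
  - exists nil. simpl. split; [lra|]. intros m p Hm; lia.
  - destruct IH as [l [Hl Hc]]. { intros m Hm; apply H; lia. }
    destruct (H M ltac:(lia)) as [l' [Hl' Hc']].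
    exists (l ++ l'). split.
    + rewrite length_app, plus_INR, S_INR. lra.
    + intros m p Hm Hp. destruct (Nat.eq_dec m M) as [->|Hne].
      * destruct (Hc' p Hp) as [c [Hc1 Hc2]]. exists c; split; [apply in_or_app; right|]; auto.
      * destruct (Hc m p ltac:(lia) Hp) as [c [Hc1 Hc2]]. exists c; split; [apply in_or_app; left|]; auto.
Qed.

Lemma le_c_sqrt a c Y : 0 <= a -> 0 <= c -> 0 <= Y -> a*a <= c*c*Y -> a <= c * sqrt Y.
Proof.
  intros Ha Hc HY H. pose proof (sqrt_pos Y). apply sq_le; [lra| apply Rmult_le_pos; lra|].
  replace (c * sqrt Y * (c * sqrt Y)) with (c*c*(sqrt Y * sqrt Y)) by ring.
  rewrite sqrt_sqrt; lra.
Qed.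

Lemma abs_le_norm x y : Rabs x <= sqrt (x^2 + y^2).
Proof.
  rewrite <- sqrt_Rsqr_abs. apply sqrt_le_1_alt. unfold Rsqr. pose proof (pow2_ge_0 y). nra.
Qed.

Lemma core N L k1 k2 A : 1 <= N -> 1 <= L -> k2^2 <= k1^2 -> norm2 (k1,k2) <= A ->
  exists sq : list (R*R), INR (length sq) <= 222 * (N * sqrt (N * L)) /\
  forall k', shell_set N L A (k1,k2) k' -> exists c, In c sq /\ in_unit_square c k'.
Proof.
  intros HN HL Hkk HA. unfold norm2 in HA; cbn [fst snd] in HA.
  pose proof (sqrt_pos (k1^2+k2^2)).
  assert (HNL1 : 1 <= sqrt (N*L)).
  { replace 1 with (1 * sqrt 1) by (rewrite sqrt_1; ring). rewrite Rmult_1_l. apply sqrt_le_1_alt. nra. }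
  destruct (Rlt_dec (2*N) A) as [Hbig|Hsmall].
  { exists nil. split. { simpl. nra. }
    intros [x y] [H1 [H2 [H3 H4]]]. lra. }
  set (B := 74 * sqrt (N*L)).
  set (M := Z.to_nat (up (2*N))).
  destruct (up_nat (2*N)) as [HM1 HM2]; [lra|]. fold M in HM1, HM2.
  destruct (build (fun m p => shell_set N L A (k1,k2) p /\ -N + INR m <= fst p <= -N + INR m + 1) B M)
    as [l [Hl Hc]].
  { unfold B; lra. }
  { intros m Hm. set (x0 := -N + INR m).
    destruct (Rle_lt_dec L N) as [HLN|HLN].
    - destruct (column k1 k2 A L x0 ltac:(lra) Hkk HA) as [ys [Hys Hcv]].
      exists (map (fun t => (x0,t)) ys). split.
      + rewrite length_map. 
        assert (sqrt ((A + L + 2) * (L + 4)) <= 5 * sqrt (N*L)).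
        { apply le_c_sqrt; [apply sqrt_pos|lra|nra|]. 
          assert (0 <= A + L + 2) by lra. assert (0 <= L + 4) by lra.
          rewrite sqrt_sqrt by (apply Rmult_le_pos; lra).
          replace (5*5*(N*L)) with ((5*N)*(5*L)) by ring.
          apply Rmult_le_compat; lra. }
        assert (L <= sqrt (N*L)) by (replace (sqrt (N*L)) with (1 * sqrt (N*L)) by ring; apply le_c_sqrt; nra).
        unfold B. lra.
      + intros [x y] [[H1 [H2 [H3 H4]]] [H5 H6]]. cbn [fst snd] in *.
        unfold norm2, sub2 in *; cbn [fst snd] in *.
        destruct (Hcv y) as [t [Ht1 Ht2]].
        { unfold gq.
          assert (R1 : Rabs (x0 - x) <= 1) by (apply Rabs_le; lra).
          assert (R2 : Rabs (x - x0) <= 1) by (apply Rabs_le; lra).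
          assert (R3 : Rabs ((k1-x0) - (k1-x)) <= 1) by (apply Rabs_le; lra).
          assert (R4 : Rabs ((k1-x) - (k1-x0)) <= 1) by (apply Rabs_le; lra).
          pose proof (sqrt_shift _ _ y R1). pose proof (sqrt_shift _ _ y R2).
          pose proof (sqrt_shift _ _ (k2-y) R3). pose proof (sqrt_shift _ _ (k2-y) R4).
          lra. }
        exists (x0, t). split; [apply (in_map (fun t => (x0,t))); auto|].
        unfold in_unit_square; simpl. lra.
    - destruct (cover1d (-N) N) as [ys [Hys Hcv]].
      exists (map (fun t => (x0,t)) ys). split.
      + rewrite length_map.
        assert (N <= sqrt (N*L)) by (replace (sqrt (N*L)) with (1 * sqrt (N*L)) by ring; apply le_c_sqrt; nra).
        assert (Rmax 0 (N - - N) = N - - N) by (apply Rmax_right; lra).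
        unfold B. lra.
      + intros [x y] [[H1 [H2 [H3 H4]]] [H5 H6]]. cbn [fst snd] in *.
        unfold norm2, sub2 in *; cbn [fst snd] in *.
        pose proof (abs_le_norm y x). rewrite Rplus_comm in H1.
        destruct (Hcv y) as [t [Ht1 Ht2]].
        { pose proof (Rle_abs y). pose proof (Rle_abs (-y)). rewrite Rabs_Ropp in *. lra. }
        exists (x0, t). split; [apply (in_map (fun t => (x0,t))); auto|].
        unfold in_unit_square; simpl. lra. }
  exists l. split.
  - assert (INR M <= 3 * N) by lra.
    assert (0 <= B) by (unfold B; lra).
    apply Rle_trans with (INR M * B); [exact Hl|].
    apply Rle_trans with (3 * N * B); [apply Rmult_le_compat_r; lra|].
    unfold B. lra.
  - intros [x y] Hs.
    pose proof Hs as [H1 _]. unfold norm2 in H1; cbn [fst snd] in H1.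
    pose proof (abs_le_norm x y).
    assert (Hx : -N <= x <= N).
    { pose proof (Rle_abs x). pose proof (Rle_abs (-x)). rewrite Rabs_Ropp in *. lra. }
    destruct (floor_nat (x + N)) as [m Hm]; [lra|].
    apply (Hc m).
    + apply INR_lt. lra.
    + split; [exact Hs|]. simpl. lra.
Qed.

Theorem propositionA2 :
  exists C : R, 0 < C /\
  forall (N L : R), 1 <= N -> 1 <= L ->
  forall (k : R * R) (A : R), norm2 k <= A ->
  exists squares : list (R * R),
    INR (length squares) <= C * Rpower N (3 / 2) * Rpower L (1 / 2) /\
    forall k' : R * R, shell_set N L A k k' ->
      exists c, In c squares /\ in_unit_square c k'.
Proof.
  exists 222. split; [lra|].
  intros N L HN HL [k1 k2] A HA.
  assert (HR : 222 * Rpower N (3 / 2) * Rpower L (1 / 2) = 222 * (N * sqrt (N * L))).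
  { replace (3/2) with (1 + /2) by field. replace (1/2) with (/2) by field.
    rewrite Rpower_plus, Rpower_1, !Rpower_sqrt by lra.
    rewrite sqrt_mult by lra. ring. }
  rewrite HR.
  destruct (Rle_lt_dec (k2^2) (k1^2)) as [Hkk|Hkk].
  - exact (core N L k1 k2 A HN HL Hkk HA).
  - assert (HA' : norm2 (k2,k1) <= A) by (unfold norm2 in *; cbn [fst snd] in *; rewrite Rplus_comm; exact HA).
    destruct (core N L k2 k1 A HN HL (Rlt_le _ _ Hkk) HA') as [sq [Hl Hc]].
    exists (map (fun c => (snd c, fst c)) sq). split.
    + rewrite length_map. exact Hl.
    + intros [x y] [H1 [H2 H3]].
      destruct (Hc (y,x)) as [c [Hc1 Hc2]].
      { unfold shell_set, norm2, sub2 in *; cbn [fst snd] in *.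
        rewrite (Rplus_comm (y^2)), (Rplus_comm ((k2-y)^2)). auto. }
      exists (snd c, fst c). split.
      * apply (in_map (fun c => (snd c, fst c))). exact Hc1.
      * destruct c as [c1 c2]. unfold in_unit_square in *; cbn [fst snd] in *. tauto.
Qed.
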